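(* On the Euler graph, under the symmetric measure $\mu$, the vertex process satisfies $V_n\to\infty$ and $|n|-V_n\to\infty$ almost surely as $n\to-\infty$.
   Context: The Euler graph has, at each level $n\le0$, vertices labelled $0,\dots,|n|$; vertex $v$ at level $n$ is connected to vertex $v$ at level $n-1$ by $v+1$ edges and to vertex $v+1$ at level $n-1$ by $|n|+1-v$ edges (so $|n|+2$ edges down from $v$). A random path is a sequence of connected edges starting from the single vertex at level 0; $V_n$ is its vertex at level $n$. The symmetric measure $\mu$ is the law of the random path in which, for each $n\le0$, given the path from level $0$ down to level $n$, the next edge (between levels $n$ and $n-1$) is uniformly distributed among the $|n|+2$ edges joining $V_n$ to level $n-1$. Equivalently $(V_n)$ is Markov with $\mathbb P(V_{n-1}=v\mid V_n=v)=\frac{v+1}{|n|+2}$ and $\mathbb P(V_{n-1}=v+1\mid V_n=v)=\frac{|n|+1-v}{|n|+2}$. *)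

(* Defs.v *)
From Stdlib Require Import Reals Arith.
Open Scope R_scope.

(* A (candidate) vertex path is w : nat -> nat, with w k = V_{-k}
   (the vertex at level n = -k, so |n| = k). *)

(* Transition probability from vertex a at level -k to vertex b at level -(k+1),
   under the symmetric measure: (a+1)/(k+2) to stay at a, (k+1-a)/(k+2) to go to a+1. *)
Definition trans (k a b : nat) : R :=
  if Nat.eqb b a then INR (a + 1) / INR (k + 2)
  else if Nat.eqb b (a + 1) then (INR (k + 1) - INR a) / INR (k + 2)
  else 0.

Fixpoint prod_trans (f : nat -> nat) (N : nat) : R :=
  match N with
  | O => 1
  | S m => prod_trans f m * trans m (f m) (f (S m))
  end.

Definition cyl_prob (f : nat -> nat) (N : nat) : R :=
  if Nat.eqb (f O) O then prod_trans f N else 0.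

Definition in_cyl (f : nat -> nat) (N : nat) (w : nat -> nat) : Prop :=
  forall k, (k <= N)%nat -> w k = f k.

Fixpoint partial_sum (u : nat -> R) (m : nat) : R :=
  match m with
  | O => u O
  | S p => partial_sum u p + u (S p)
  end.

(* A set of paths is mu-null iff its (Caratheodory) outer measure, built from
   the cylinder premeasure, is zero: for every eps > 0 it is covered by
   countably many cylinders of total mu-mass <= eps. *)
Definition mu_null (A : (nat -> nat) -> Prop) : Prop :=
  forall eps : R, 0 < eps ->
    exists (F : nat -> nat -> nat) (L : nat -> nat),
      (forall w, A w -> exists i, in_cyl (F i) (L i) w) /\
      (forall m, partial_sum (fun i => cyl_prob (F i) (L i)) m <= eps).

Definition mu_as (P : (nat -> nat) -> Prop) : Prop :=
  mu_null (fun w => ~ P w).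

(* u k -> +infinity as k -> infinity (k = |n|, n -> -infinity). *)
Definition tends_to_infty (u : nat -> nat) : Prop :=
  forall M : nat, exists K : nat, forall k, (K <= k)%nat -> (M <= u k)%nat.

(* Main.v *)
Require Import Defs.
From Stdlib Require Import Reals Arith.
From Stdlib Require Import Lra Lia List Cantor ClassicalEpsilon Classical.
Open Scope R_scope.

Arguments to_nat : simpl never.
Arguments of_nat : simpl never.
Fixpoint enc (l : list nat) : nat :=
  match l with nil => 0%nat | x :: l => to_nat (x, enc l) end.
Fixpoint dec (f c : nat) : list nat :=
  match f with
  | O => nil
  | S f => fst (of_nat c) :: dec f (snd (of_nat c))
  end.
Lemma dec_enc l : dec (length l) (enc l) = l.
Proof. induction l as [|x l IH]; simpl; auto. rewrite cancel_of_to. simpl. now rewrite IH. Qed.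

Definition idx_t (i : nat) : nat := snd (of_nat i).
Definition idx_v (i : nat) : nat := snd (of_nat (fst (of_nat i))).
Definition idx_s (i : nat) : list nat :=
  let b := fst (of_nat (fst (of_nat i))) in dec (fst (of_nat b)) (snd (of_nat b)).
Definition mk_idx (s : list nat) (v t : nat) : nat :=
  to_nat (to_nat (to_nat (length s, enc s), v), t).
Lemma idx_mk s v t :
  idx_t (mk_idx s v t) = t /\ idx_v (mk_idx s v t) = v /\ idx_s (mk_idx s v t) = s.
Proof.
  unfold idx_t, idx_v, idx_s, mk_idx. rewrite !cancel_of_to. simpl.
  rewrite !cancel_of_to. simpl. rewrite cancel_of_to. simpl. rewrite dec_enc. auto.
Qed.

Definition G (s : list nat) (v t k : nat) : nat :=
  if Nat.ltb k (length s) then nth k s 0%nat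
  else if Nat.eqb t 0 then v else (v + (k - length s))%nat.

Definition Cover (i : nat) (w : nat -> nat) : Prop :=
  let s := idx_s i in let v := idx_v i in let t := idx_t i in
  if Nat.leb t 1 then (forall k, w k = G s v t k)
  else (forall k, (k <= pred (length s))%nat -> w k = nth k s 0%nat) /\
       cyl_prob (fun k => nth k s 0%nat) (pred (length s)) = 0.

Lemma ratio_half a b : 0 < b -> 2 * Rabs a <= b -> Rabs (a / b) <= 1/2.
Proof.
  intros Hb H. unfold Rdiv. rewrite Rabs_mult, Rabs_inv, (Rabs_pos_eq b) by lra.
  apply (Rmult_le_reg_r b); auto.
  replace (Rabs a * / b * b) with (Rabs a) by (field; lra). lra.
Qed.

Lemma prod_geom f K :
  (forall k, (K <= k)%nat -> Rabs (trans k (f k) (f (S k))) <= 1/2) ->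
  forall j, Rabs (prod_trans f (K + j)) <= Rabs (prod_trans f K) * (1/2) ^ j.
Proof.
  intros H j. induction j as [|j IH].
  - rewrite Nat.add_0_r. simpl. lra.
  - rewrite Nat.add_succ_r. simpl. rewrite Rabs_mult.
    replace (Rabs (prod_trans f K) * (1 / 2 * (1 / 2) ^ j))
      with ((Rabs (prod_trans f K) * (1 / 2) ^ j) * (1/2)) by ring.
    apply Rmult_le_compat; try apply Rabs_pos; auto. apply H. lia.
Qed.

Lemma small_cyl f K eps : 0 < eps ->
  (forall k, (K <= k)%nat -> Rabs (trans k (f k) (f (S k))) <= 1/2) ->
  exists L, cyl_prob f L <= eps.
Proof.
  intros He H.
  assert (Hp : exists L, Rabs (prod_trans f L) <= eps).
  { destruct (Req_dec_T (prod_trans f K) 0) as [E|E].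
    - exists K. rewrite E, Rabs_R0. lra.
    - assert (Ha : 0 < Rabs (prod_trans f K)) by (apply Rabs_pos_lt; auto).
      destruct (pow_lt_1_zero (1/2)) with (y := eps / Rabs (prod_trans f K)) as [N HN].
      + rewrite Rabs_pos_eq; lra.
      + apply Rdiv_lt_0_compat; auto.
      + exists (K + N)%nat. eapply Rle_trans. apply prod_geom; auto.
        specialize (HN N (le_n _)). rewrite Rabs_pos_eq in HN by (apply pow_le; lra).
        apply (Rmult_lt_compat_l (Rabs (prod_trans f K))) in HN; auto.
        replace (Rabs (prod_trans f K) * (eps / Rabs (prod_trans f K))) with eps in HN
          by (field; lra). lra. }
  destruct Hp as [L HL]. exists L. unfold cyl_prob.
  destruct (Nat.eqb (f 0%nat) 0); [|lra].
  eapply Rle_trans; [apply Rle_abs|exact HL].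
Qed.

Lemma G_half s v t : (t <= 1)%nat ->
  forall k, (length s + 2 * (length s + v + 1) <= k)%nat ->
  Rabs (trans k (G s v t k) (G s v t (S k))) <= 1/2.
Proof.
  intros Ht k Hk. unfold G.
  replace (Nat.ltb k (length s)) with false by (symmetry; apply Nat.ltb_ge; lia).
  replace (Nat.ltb (S k) (length s)) with false by (symmetry; apply Nat.ltb_ge; lia).
  assert (Hk2 : 0 < INR (k + 2)) by (apply lt_0_INR; lia).
  destruct (Nat.eqb t 0).
  - unfold trans. rewrite Nat.eqb_refl. apply ratio_half; auto.
    rewrite Rabs_pos_eq by apply pos_INR.
    replace 2 with (INR 2) by reflexivity. rewrite <- mult_INR. apply le_INR. lia.
  - unfold trans.
    replace (Nat.eqb (v + (S k - length s)) (v + (k - length s))) with false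
      by (symmetry; apply Nat.eqb_neq; lia).
    replace (Nat.eqb (v + (S k - length s)) (v + (k - length s) + 1)) with true
      by (symmetry; apply Nat.eqb_eq; lia).
    apply ratio_half; auto.
    rewrite (plus_INR v), minus_INR by lia. rewrite !plus_INR.
    replace (INR k + INR 1 - (INR v + (INR k - INR (length s))))
      with (INR 1 + INR (length s) - INR v) by ring.
    assert (H1 : 2 * (INR 1 + INR (length s) + INR v) <= INR (k + 2)).
    { replace 2 with (INR 2) by reflexivity. rewrite <- !plus_INR, <- mult_INR.
      apply le_INR. lia. }
    pose proof (pos_INR v). pose proof (pos_INR (length s)).
    assert (INR 1 = 1) by reflexivity.
    replace (INR k + INR 2) with (INR (k+2)) by (rewrite plus_INR; ring). unfold Rabs; destruct Rcase_abs; lra.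
Qed.

Lemma cost_small i eps : 0 < eps ->
  exists p : (nat -> nat) * nat,
    (forall w, Cover i w -> in_cyl (fst p) (snd p) w) /\ cyl_prob (fst p) (snd p) <= eps.
Proof.
  intros He. unfold Cover.
  destruct (Nat.leb (idx_t i) 1) eqn:Et.
  - destruct (small_cyl (G (idx_s i) (idx_v i) (idx_t i))
       (length (idx_s i) + 2 * (length (idx_s i) + idx_v i + 1)) eps He) as [L HL].
    { apply G_half. apply Nat.leb_le; auto. }
    exists (G (idx_s i) (idx_v i) (idx_t i), L). split; auto.
    intros w Hw k _. apply Hw.
  - destruct (Req_dec_T (cyl_prob (fun k => nth k (idx_s i) 0%nat) (pred (length (idx_s i)))) 0)
      as [E|E].
    + exists (fun k => nth k (idx_s i) 0%nat, pred (length (idx_s i))). simpl. split.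
      * intros w [Hw _] k Hk. apply Hw; auto.
      * lra.
    + exists (fun _ => 1%nat, 0%nat). simpl. split.
      * intros w [_ Hw]. contradiction.
      * unfold cyl_prob. simpl. lra.
Qed.

Lemma psum_bound (u : nat -> R) eps : 0 < eps ->
  (forall i, u i <= eps * (1/2) ^ (S i)) ->
  forall m, partial_sum u m <= eps.
Proof.
  intros He H m.
  assert (forall m, partial_sum u m <= eps * (1 - (1/2) ^ (S m))).
  { intro n. induction n as [|n IH].
    - simpl. specialize (H 0%nat). simpl in H. lra.
    - simpl partial_sum. specialize (H (S n)).
      replace ((1/2) ^ (S (S n))) with (1/2 * (1/2)^(S n)) in * by reflexivity.
      nra. }
  eapply Rle_trans; [apply H0|]. assert (0 < (1/2)^(S m)) by (apply pow_lt; lra). nra.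
Qed.

Lemma mono (u : nat -> nat) : (forall k, (u k <= u (S k))%nat) ->
  forall k k', (k <= k')%nat -> (u k <= u k')%nat.
Proof.
  intros H k k' Hk. induction Hk; auto. specialize (H m). lia.
Qed.

Lemma ev_const (u : nat -> nat) : (forall k, (u k <= u (S k))%nat) ->
  forall n k0, (forall k, (k0 <= k)%nat -> (u k <= u k0 + n)%nat) ->
  exists k1, forall k, (k1 <= k)%nat -> u k = u k1.
Proof.
  intros Hm n. induction n as [|n IH]; intros k0 Hb.
  - exists k0. intros k Hk. specialize (Hb k Hk). pose proof (mono u Hm k0 k Hk). lia.
  - destruct (classic (forall k, (k0 <= k)%nat -> u k = u k0)) as [Hc|Hc].
    + exists k0; auto.
    + apply not_all_ex_not in Hc. destruct Hc as [k Hk].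
      assert (Hk0 : (k0 <= k)%nat /\ u k <> u k0).
      { destruct (le_lt_dec k0 k) as [Hl|Hl].
        - split; auto.
        - exfalso. apply Hk. intro; lia. }
      destruct Hk0 as [Hk0 Hne].
      apply (IH k). intros k' Hk'.
      pose proof (mono u Hm k0 k Hk0). specialize (Hb k' ltac:(lia)). lia.
Qed.

Lemma nth_prefix (w : nat -> nat) n j : (j < n)%nat -> nth j (map w (seq 0 n)) 0%nat = w j.
Proof.
  intros Hj. rewrite (nth_indep _ _ (w 0%nat)) by (rewrite length_map, length_seq; auto).
  rewrite map_nth, seq_nth; auto.
Qed.

Lemma unbounded_tends (u : nat -> nat) : (forall k, (u k <= u (S k))%nat) ->
  ~ (exists M, forall k, (u k < M)%nat) -> tends_to_infty u.
Proof.
  intros Hm Hn M. destruct (classic (exists K, (M <= u K)%nat)) as [[K HK]|HK].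
  - exists K. intros k Hk. pose proof (mono u Hm K k Hk). lia.
  - exfalso. apply Hn. exists M. intros k. destruct (le_lt_dec M (u k)); auto.
    exfalso; apply HK; eauto.
Qed.

Lemma fail_covered (w : nat -> nat) :
  ~ (tends_to_infty w /\
     (forall M : nat, exists K : nat, forall k, (K <= k)%nat -> (M + w k <= k)%nat)) ->
  exists i, Cover i w.
Proof.
  intros Hf.
  destruct (classic (w 0%nat = 0%nat /\ forall k, w (S k) = w k \/ w (S k) = (w k + 1)%nat))
    as [[H0 Hv]|Hinv].
  - assert (Hm : forall k, (w k <= w (S k))%nat) by (intro k; destruct (Hv k); lia).
    assert (Hle : forall k, (w k <= k)%nat).
    { induction k; [lia|]. destruct (Hv k); lia. }
    set (u := fun k => (k - w k)%nat).
    assert (Hmu : forall k, (u k <= u (S k))%nat).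
    { intro k; unfold u. specialize (Hle k). destruct (Hv k); lia. }
    destruct (classic (exists M, forall k, (w k < M)%nat)) as [[M HM]|HM].
    + destruct (ev_const w Hm M 0) as [k1 Hk1].
      { intros k _. specialize (HM k). lia. }
      exists (mk_idx (map w (seq 0 k1)) (w k1) 0).
      unfold Cover. destruct (idx_mk (map w (seq 0 k1)) (w k1) 0) as [-> [-> ->]].
      simpl. intro k. unfold G. rewrite length_map, length_seq.
      destruct (Nat.ltb k k1) eqn:E.
      * apply Nat.ltb_lt in E. rewrite nth_prefix; auto.
      * apply Nat.ltb_ge in E. simpl. apply Hk1; auto.
    + destruct (classic (exists M, forall k, (u k < M)%nat)) as [[M HM']|HM'].
      * destruct (ev_const u Hmu M 0) as [k1 Hk1].
        { intros k _. specialize (HM' k). lia. }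
        exists (mk_idx (map w (seq 0 k1)) (w k1) 1).
        unfold Cover. destruct (idx_mk (map w (seq 0 k1)) (w k1) 1) as [-> [-> ->]].
        simpl. intro k. unfold G. rewrite length_map, length_seq.
        destruct (Nat.ltb k k1) eqn:E.
        -- apply Nat.ltb_lt in E. rewrite nth_prefix; auto.
        -- apply Nat.ltb_ge in E. simpl. specialize (Hk1 k E). unfold u in Hk1.
           pose proof (Hle k). pose proof (Hle k1). pose proof (mono w Hm k1 k E). lia.
      * exfalso. apply Hf. split.
        -- apply unbounded_tends; auto.
        -- intro M. destruct (unbounded_tends u Hmu HM' M) as [K HK].
           exists K. intros k Hk. specialize (HK k Hk). unfold u in HK.
           pose proof (Hle k). lia.
  - destruct (Nat.eq_dec (w 0%nat) 0) as [H0|H0].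
    + assert (Hs : exists k, w (S k) <> w k /\ w (S k) <> (w k + 1)%nat).
      { apply NNPP. intro C. apply Hinv. split; auto. intro k.
        destruct (Nat.eq_dec (w (S k)) (w k)); auto.
        destruct (Nat.eq_dec (w (S k)) (w k + 1)); auto.
        exfalso; apply C; eauto. }
      destruct Hs as [k [Hk1 Hk2]].
      exists (mk_idx (map w (seq 0 (S (S k)))) 0 2).
      unfold Cover. destruct (idx_mk (map w (seq 0 (S (S k)))) 0 2) as [-> [-> ->]].
      simpl Nat.leb. cbv iota. rewrite length_map, length_seq. simpl pred. split.
      * intros j Hj. rewrite nth_prefix; auto. lia.
      * unfold cyl_prob. rewrite nth_prefix by lia. rewrite H0. simpl Nat.eqb. cbv iota.
        cbn [prod_trans]. rewrite (nth_prefix w _ k), (nth_prefix w _ (S k)) by lia.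
        unfold trans. replace (Nat.eqb (w (S k)) (w k)) with false
          by (symmetry; apply Nat.eqb_neq; auto).
        replace (Nat.eqb (w (S k)) (w k + 1)) with false
          by (symmetry; apply Nat.eqb_neq; auto). ring.
    + exists (mk_idx (w 0%nat :: nil) 0 2).
      unfold Cover. destruct (idx_mk (w 0%nat :: nil) 0 2) as [-> [-> ->]].
      simpl. split.
      * intros j Hj. assert (j = 0%nat) by lia. subst; auto.
      * unfold cyl_prob. simpl. replace (Nat.eqb (w 0%nat) 0) with false
          by (symmetry; apply Nat.eqb_neq; auto). reflexivity.
Qed.

Theorem lemma7p1 :
  mu_as (fun w =>
    tends_to_infty w /\
    (forall M : nat, exists K : nat, forall k, (K <= k)%nat -> (M + w k <= k)%nat)).
Proof.
  intros eps Heps.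
  assert (H : forall i, { p : (nat -> nat) * nat |
    (forall w, Cover i w -> in_cyl (fst p) (snd p) w) /\
    cyl_prob (fst p) (snd p) <= eps * (1/2) ^ (S i) }).
  { intro i. apply constructive_indefinite_description. apply cost_small.
    apply Rmult_lt_0_compat; auto. apply pow_lt; lra. }
  exists (fun i => fst (proj1_sig (H i))), (fun i => snd (proj1_sig (H i))).
  split.
  - intros w Hw. destruct (fail_covered w Hw) as [i Hi]. exists i.
    destruct (proj2_sig (H i)) as [Hp _]. auto.
  - apply psum_bound; auto. intro i. destruct (proj2_sig (H i)) as [_ Hp]. auto.
Qed.
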